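(* Let $d\ge 7$, let $G$ be a $d$-regular graph with girth $5$, let $x\in V(G)$ with neighbors $x_1,\dots,x_d$ (in this fixed order) and bunches $X_t=N(x_t)\setminus\{x\}$, $t\in[d]$. Fix $i$ with $2\le i\le d$ and suppose every vertex of $X_i$ has backward degree at most $1$. Suppose $c$ is a proper partial coloring of $G$ defined on $N[x]\cup\bigcup_{t\in[i-1]}X_t$ with $c(x)=d+1$, $c(x_t)=t$ for all $t\in[d]$, and such that for each $t\in[i-1]$ the vertices of $X_t$ receive pairwise distinct colors from $[d]\setminus\{t\}$ (so that $x,x_1,\dots,x_{i-1}$ are b-vertices of colors $d+1,1,\dots,i-1$). Then $c$ can be extended to a proper partial coloring on $N[x]\cup\bigcup_{t\in[i]}X_t$ in which the vertices of $X_i$ receive pairwise distinct colors from $[d]\setminus\{i\}$, so that $x_i$ is also a b-vertex (of color $i$).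
   Context: $[k]=\{1,\dots,k\}$. The $i$-th bunch of $x$ is $X_i=N(x_i)\setminus\{x\}$, which has $d-1$ vertices. With respect to the ordering $x_1,\dots,x_d$, the backward degree of a vertex $v\in X_i$ is the number of neighbors of $v$ in $X_1\cup\dots\cup X_{i-1}$. A vertex $v$ is a b-vertex of a (partial) coloring with colors $[d+1]$ if all $d+1$ colors appear on its closed neighborhood $N[v]$. *)

(* Defs.v *)
From mathcomp Require Import all_boot.
Set Implicit Arguments. Unset Strict Implicit. Unset Printing Implicit Defensive.

Definition simple_graph (T : finType) (e : rel T) : Prop :=
  symmetric e /\ irreflexive e.

Definition nbhd (T : finType) (e : rel T) (v : T) : {set T} := [set w | e v w].

Definition regular (T : finType) (e : rel T) (d : nat) : Prop :=
  forall v : T, #|nbhd e v| = d.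

Definition has_cycle_of_length (T : finType) (e : rel T) (k : nat) : Prop :=
  3 <= k /\ exists f : nat -> T,
    {in [pred j | j < k] &, injective f} /\
    forall j, j < k -> e (f j) (f (j.+1 %% k)).

Definition girth_eq (T : finType) (e : rel T) (g : nat) : Prop :=
  (forall k, k < g -> ~ has_cycle_of_length e k) /\ has_cycle_of_length e g.

(* the t-th bunch of x, with neighbours listed by xn : nat -> T (1-indexed) *)
Definition bunch (T : finType) (e : rel T) (x : T) (xn : nat -> T) (t : nat)
  : {set T} := nbhd e (xn t) :\ x.

Definition bunches_upto (T : finType) (e : rel T) (x : T) (xn : nat -> T)
  (k : nat) : {set T} := \bigcup_(1 <= t < k.+1) bunch e x xn t.

Definition backward_degree (T : finType) (e : rel T) (x : T) (xn : nat -> T)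
  (i : nat) (v : T) : nat :=
  #|nbhd e v :&: bunches_upto e x xn i.-1|.

(* partial colorings: c v = None means v is uncolored *)
Definition proper_partial (T : finType) (e : rel T) (c : T -> option nat) : Prop :=
  forall u v a b, e u v -> c u = Some a -> c v = Some b -> a <> b.

Definition partial_coloring_on (T : finType) (e : rel T) (k : nat)
  (c : T -> option nat) (D : {set T}) : Prop :=
  proper_partial e c /\
  (forall v, (v \in D) <-> c v <> None) /\
  (forall v a, c v = Some a -> 1 <= a <= k).

Definition rainbow_avoiding (T : finType) (c : T -> option nat) (X : {set T})
  (d t : nat) : Prop :=
  (forall v, v \in X -> exists a, c v = Some a /\ 1 <= a <= d /\ a <> t) /\
  (forall u v, u \in X -> v \in X -> c u = c v -> u = v).

(* Main.v *)
Require Import Defs.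
From mathcomp Require Import all_boot.
From Stdlib Require Import Classical.
From mathcomp Require Import zify.

Lemma hall_lem (T : eqType) (f : T -> option nat) n : forall (S : seq T) (L : seq nat),
  size S = n -> size L = n -> uniq S -> uniq L ->
  (S = [::] \/ forall a, a \in L -> exists2 u, u \in S & f u != Some a) ->
  exists s : T -> nat, (forall u, u \in S -> s u \in L /\ f u != Some (s u)) /\
    {in S &, injective s}.
Proof.
elim: n => [|n IH] S L hS hL uS uL H.
  exists (fun _ => 0); rewrite (size0nil hS); split => //.
have Hf : forall a, a \in L -> exists2 u, u \in S & f u != Some a.
  by case: H => // E; rewrite E in hS.
have [a [aL [u [uin [fu Hrem]]]]] : exists a, a \in L /\ exists u, u \in S /\ f u != Some a /\
   (rem u S = [::] \/ forall b, b \in rem a L -> exists2 w, w \in rem u S & f w != Some b).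
  case: (classic (exists b, b \in L /\ exists2 u0, u0 \in S &
     forall w, w \in S -> w != u0 -> f w = Some b)) => [[b [bL [u0 u0S Hu0]]]|Hn].
    have [u uin fu] := Hf b bL.
    exists b; split => //; exists u; do 2 split => //.
    have uu0 : u = u0.
      apply/eqP; apply: contraNT fu => /Hu0 -> //; exact: eqxx.
    case E: (rem u S) => [|w S']; [by left | right] => b' b'L.
    have : w \in rem u S by rewrite E mem_head.
    rewrite (mem_rem_uniq _ uS) inE => /andP [wu wS].
    exists w; first by rewrite mem_head.
    rewrite Hu0 -?uu0 //.
    move: b'L; rewrite (mem_rem_uniq _ uL) inE => /andP [b'b _].
    by apply/eqP => [[]] Eb; rewrite Eb eqxx in b'b.
  case: L hL uL Hf Hn {H} => [//|a L0] hL uL Hf Hn.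
  have [u uin fu] := Hf a (mem_head _ _).
  exists a; split; first exact: mem_head.
  exists u; do 2 split => //; right => b bL.
  apply: NNPP => Hno; apply: Hn; exists b; split; first exact: (mem_rem bL).
  exists u => // w wS wu; apply: NNPP => Hfw; apply: Hno; exists w.
    by rewrite (mem_rem_uniq _ uS) inE wu wS.
  by apply/eqP.
have [s' [Hs1 Hs2]] : exists s' : T -> nat,
    (forall v, v \in rem u S -> s' v \in rem a L /\ f v != Some (s' v)) /\
    {in rem u S &, injective s'}.
  apply: (IH (rem u S) (rem a L)).
  - by rewrite size_rem // hS.
  - by rewrite size_rem // hL.
  - exact: rem_uniq.
  - exact: rem_uniq.
  - exact: Hrem.
exists (fun v => if v == u then a else s' v); split.
  move=> v vS; case: eqP => [->|/eqP vu]; first by split.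
  have vr : v \in rem u S by rewrite (mem_rem_uniq _ uS) inE vu vS.
  have [h1 h2] := Hs1 v vr; split => //; exact: mem_rem h1.
move=> v w vS wS /=.
have nr : forall y, y \in S -> y != u -> s' y != a.
  move=> y yS yu; have yr : y \in rem u S by rewrite (mem_rem_uniq _ uS) inE yu yS.
  have [h1 _] := Hs1 y yr; move: h1; rewrite (mem_rem_uniq _ uL) inE; by case/andP.
case: eqP => [->|/eqP vu]; case: eqP => [->|/eqP wu] //.
- by move=> E; move: (nr w wS wu); rewrite E eqxx.
- by move=> E; move: (nr v vS vu); rewrite E eqxx.
- apply: Hs2; by rewrite (mem_rem_uniq _ uS) inE ?vu ?wu ?vS ?wS.
Qed.
Lemma mem_bigcup_seq (T : finType) (F : nat -> {set T}) (r : seq nat) w :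
  w \in \bigcup_(t <- r) F t -> exists2 t, t \in r & w \in F t.
Proof.
elim: r => [|t r IH]; first by rewrite big_nil inE.
rewrite big_cons inE => /orP [h|/IH [t' h1 h2]].
  by exists t; rewrite ?mem_head.
by exists t'; rewrite // in_cons h1 orbT.
Qed.

Lemma no_quad (T : finType) (e : rel T) a b c d :
  simple_graph e -> girth_eq e 5 -> e a b -> e b c -> e c d -> e d a ->
  a != c -> b != d -> False.
Proof.
move=> [esym eirr] [Hg _] eab ebc ecd eda ac bd.
have ne : forall u v, e u v -> (u == v) = false.
  by move=> u v h; apply/negbTE/eqP => E; rewrite E eirr in h.
have ab := ne _ _ eab; have bc := ne _ _ ebc; have cd := ne _ _ ecd; have da := ne _ _ eda.
have ba : (b == a) = false by rewrite eq_sym.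
have cb : (c == b) = false by rewrite eq_sym.
have dc : (d == c) = false by rewrite eq_sym.
have ad : (a == d) = false by rewrite eq_sym.
have ac' : (a == c) = false by apply/negbTE.
have ca : (c == a) = false by rewrite eq_sym.
have bd' : (b == d) = false by apply/negbTE.
have db : (d == b) = false by rewrite eq_sym.
apply: (Hg 4 erefl); split => //.
exists (fun j => nth a [:: a; b; c; d] j); split.
  move=> j1 j2; rewrite !inE.
  case: j1 => [|[|[|[|j1]]]] //; case: j2 => [|[|[|[|j2]]]] //= _ _ /eqP;
  by rewrite ?ab ?ba ?bc ?cb ?cd ?dc ?da ?ad ?ac' ?ca ?bd' ?db.
by case => [|[|[|[|j]]]].
Qed.

Lemma no_tri (T : finType) (e : rel T) a b c :
  simple_graph e -> girth_eq e 5 -> e a b -> e b c -> e c a -> False.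
Proof.
move=> [esym eirr] [Hg _] eab ebc eca.
have ne : forall u v, e u v -> (u == v) = false.
  by move=> u v h; apply/negbTE/eqP => E; rewrite E eirr in h.
have ab := ne _ _ eab; have bc := ne _ _ ebc; have ca := ne _ _ eca.
have ba : (b == a) = false by rewrite eq_sym.
have cb : (c == b) = false by rewrite eq_sym.
have ac : (a == c) = false by rewrite eq_sym.
apply: (Hg 3 erefl); split => //.
exists (fun j => nth a [:: a; b; c] j); split.
  move=> j1 j2; rewrite !inE.
  case: j1 => [|[|[|j1]]] //; case: j2 => [|[|[|j2]]] //= _ _ /eqP;
  by rewrite ?ab ?ba ?bc ?cb ?ac ?ca.
by case => [|[|[|j]]].
Qed.

Lemma head_filter_mem (P : pred nat) (r : seq nat) :
  (exists2 t, t \in r & P t) -> head 0 (filter P r) \in r /\ P (head 0 (filter P r)).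
Proof.
elim: r => [[t]//|t r IH] [t' h1 h2] /=.
case Pt: (P t) => /=; first by rewrite mem_head.
have [t'' t''r] : exists2 t'', t'' \in r & P t''.
  move: h1; rewrite in_cons => /orP [/eqP E|h]; first by rewrite E Pt in h2.
  by exists t'.
move=> Pt''; have [a b] := IH (ex_intro2 _ _ t'' t''r Pt'').
by rewrite in_cons a orbT.
Qed.

Theorem mainTheorem6 (T : finType) (e : rel T) (d : nat)
  (x : T) (xn : nat -> T) (i : nat) (c : T -> option nat) :
  7 <= d ->
  simple_graph e ->
  regular e d ->
  girth_eq e 5 ->
  (* x_1, ..., x_d are the neighbours of x, in this fixed order *)
  {in [pred t | 1 <= t <= d] &, injective xn} ->
  (forall v, e x v <-> exists2 t, 1 <= t <= d & v = xn t) ->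
  2 <= i <= d ->
  (forall v, v \in bunch e x xn i -> backward_degree e x xn i v <= 1) ->
  partial_coloring_on e d.+1 c
    (x |: nbhd e x :|: bunches_upto e x xn i.-1) ->
  c x = Some d.+1 ->
  (forall t, 1 <= t <= d -> c (xn t) = Some t) ->
  (forall t, 1 <= t <= i.-1 -> rainbow_avoiding c (bunch e x xn t) d t) ->
  exists c' : T -> option nat,
    partial_coloring_on e d.+1 c'
      (x |: nbhd e x :|: bunches_upto e x xn i) /\
    (forall v a, c v = Some a -> c' v = Some a) /\
    rainbow_avoiding c' (bunch e x xn i) d i.
Proof.
move=> d7 sg reg gir xinj xnb /andP [i2 id] hbd [cprop [cdom crange]] cx cxn crain.
have [esym eirr] := sg.
have exn : forall t, 1 <= t <= d -> e x (xn t).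
  by move=> t ht; apply/(xnb (xn t)); exists t.
set Xi := bunch e x xn i.
set B := bunches_upto e x xn i.-1.
have inXi : forall v, (v \in Xi) = (v != x) && e (xn i) v.
  by move=> v; rewrite /Xi /bunch /nbhd !inE.
have xninj : forall t, 1 <= t <= d -> t != i -> xn t != xn i.
  move=> t ht ti; apply: contra ti => /eqP E; apply/eqP.
  by apply: xinj => //; rewrite inE; apply/andP; split => //; lia.
have K : forall v t, v \in Xi -> 1 <= t <= d -> t != i -> e (xn t) v -> False.
  move=> v t; rewrite inXi => /andP [vx ev] ht ti etv.
  apply: (@no_quad T e x (xn t) v (xn i) sg gir (exn t ht) etv).
  - by rewrite esym.
  - by rewrite esym exn //; lia.
  - by rewrite eq_sym.
  - exact: xninj.
have notx : forall v, v \in Xi -> ~~ e x v.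
  move=> v; rewrite inXi => /andP [vx ev]; apply/negP => exv.
  apply: (@no_tri T e x (xn i) v sg gir (exn i _) ev); first by lia.
  by rewrite esym.
have memB : forall w, w \in B -> exists2 t, t \in iota 1 i.-1 & w \in bunch e x xn t.
  move=> w /mem_bigcup_seq [t]; rewrite /index_iota subn1 /= => h1 h2.
  by exists t.
have XiB : forall v, v \in Xi -> v \notin B.
  move=> v vX; apply/negP => /memB [t]; rewrite mem_iota => ht.
  rewrite /bunch /nbhd !inE => /andP [_ etv].
  by apply: (K v t vX) => //; lia.
have XiD : forall v, v \in Xi -> c v = None.
  move=> v vX; case E: (c v) => [a|] //.
  have : v \in x |: nbhd e x :|: B by apply/(cdom v); rewrite E.
  rewrite !in_setU in_set1 => /orP [/orP [/eqP vx| vn]| vB].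
  - by move: vX; rewrite inXi vx eqxx.
  - by move: vn; rewrite /nbhd inE => h; move: (notx v vX); rewrite h.
  - by move: (XiB v vX); rewrite vB.

pose pw v := [pick w in nbhd e v :&: B].
pose f v := if pw v is Some w then c w else None.
have P1 : forall v w, v \in Xi -> e v w -> w \in B -> pw v = Some w.
  move=> v w vX evw wB; rewrite /pw.
  have hw : w \in nbhd e v :&: B by rewrite in_setI /nbhd inE evw wB.
  case: pickP => [w' hw'|h0]; last by move: (h0 w); rewrite hw.
  have := hbd v vX; rewrite /backward_degree -/B => /card_le1_eqP h.
  by rewrite (h _ _ hw' hw).
pose tb w := head 0 [seq t <- iota 1 i.-1 | w \in bunch e x xn t].
have Htb : forall w, w \in B -> tb w \in iota 1 i.-1 /\ w \in bunch e x xn (tb w).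
  move=> w /memB H; exact: (@head_filter_mem (fun t => w \in bunch e x xn t) _ H).
have cardXi : #|Xi| = d.-1.
  have := cardsD1 x (nbhd e (xn i)); rewrite (reg (xn i)) -/(bunch e x xn i) -/Xi.
  have -> : x \in nbhd e (xn i) by rewrite /nbhd inE esym exn //; lia.
  by move=> ->.
have iL : i \in iota 1 d by rewrite mem_iota; lia.
have inL : forall a, (a \in rem i (iota 1 d)) = (a != i) && (1 <= a <= d).
  by move=> a; rewrite (mem_rem_uniq _ (iota_uniq 1 d)) inE mem_iota; congr (_ && _); lia.
have SizeS : size (enum Xi) = d.-1 by rewrite -cardE.
have SizeL : size (rem i (iota 1 d)) = d.-1 by rewrite size_rem // size_iota.
have Cond : enum Xi = [::] \/ forall a, a \in rem i (iota 1 d) -> exists2 u, u \in enum Xi & f u != Some a.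
  right => a; rewrite inL => /andP [ai ad].
  apply: NNPP => Hno.
  have Hall : forall u, u \in Xi -> f u = Some a.
    move=> u uX; apply: NNPP => Hn; apply: Hno; exists u; first by rewrite mem_enum.
    by apply/eqP.
  have Hw : forall u, u \in Xi -> exists w, [/\ pw u = Some w, e u w, w \in B & c w = Some a].
    move=> u uX; have := Hall u uX; rewrite /f.
    case E: (pw u) => [w|] // cw; exists w; split => //.
    - move: E; rewrite /pw; case: pickP => // w' + [<-]; by rewrite in_setI /nbhd inE => /andP [].
    - move: E; rewrite /pw; case: pickP => // w' + [<-]; by rewrite in_setI => /andP [].
  pose g u := tb (odflt x (pw u)).
  have Hg : forall u, u \in Xi -> exists w, [/\ g u = tb w, e u w, c w = Some a,
      tb w \in iota 1 i.-1 & w \in bunch e x xn (tb w)].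
    move=> u uX; have [w [pu ew wB cw]] := Hw u uX.
    have [h1 h2] := Htb w wB.
    by exists w; split => //; rewrite /g pu.
  have tbr : forall w, tb w \in iota 1 i.-1 -> 1 <= tb w <= i.-1.
    by move=> w; rewrite mem_iota; lia.
  have ga : forall u, u \in Xi -> g u != a.
    move=> u uX; have [w [-> _ cw t1 b1]] := Hg u uX.
    have [h _] := crain (tb w) (tbr w t1); have [a' [ca' [_ a't]]] := h w b1.
    move: ca'; rewrite cw => [[->]]; by rewrite eq_sym; apply/eqP.
  have ginj : {in enum Xi &, injective g}.
    move=> u1 u2; rewrite !mem_enum => u1X u2X E.
    have [w1 [g1 e1 c1 t1 b1]] := Hg u1 u1X.
    have [w2 [g2 e2 c2 t2 b2]] := Hg u2 u2X.
    have Et : tb w1 = tb w2 by rewrite -g1 -g2.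
    have [_ rb] := crain (tb w1) (tbr w1 t1).
    have ww : w1 = w2 by apply: rb => //; [rewrite Et | rewrite c1 c2].
    apply: NNPP => nu.
    move: (u1X) (u2X); rewrite !inXi => /andP [_ i1] /andP [_ i2'].
    apply: (@no_quad T e u1 w1 u2 (xn i) sg gir e1).
    - by rewrite ww esym.
    - by rewrite esym.
    - exact: i1.
    - by apply/eqP.
    - apply/eqP => E'; move: (tbr w1 t1) b1; move: (tb w1) => t tr.
      rewrite E' /bunch /nbhd !inE => /andP [_ h].
      apply: (@no_tri T e x (xn t) (xn i) sg gir (exn _ _) h); first by lia.
      by rewrite esym exn //; lia.
  have us : uniq (a :: map g (enum Xi)).
    rewrite /= (map_inj_in_uniq ginj) enum_uniq andbT.
    by apply/mapP => [[u]]; rewrite mem_enum => uX E; move: (ga u uX); rewrite -E eqxx.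
  have sub : {subset a :: map g (enum Xi) <= rem i (iota 1 d)}.
    move=> y; rewrite in_cons => /orP [/eqP ->|/mapP [u]]; first by rewrite inL ai.
    rewrite mem_enum => uX ->; have [w [-> _ _ t1 _]] := Hg u uX.
    have := tbr w t1; rewrite inL; lia.
  have := uniq_leq_size us sub; rewrite /= size_map SizeS SizeL; lia.
have [s [Hs1 Hs2]] := @hall_lem T f d.-1 (enum Xi) (rem i (iota 1 d)) SizeS SizeL (enum_uniq _) (rem_uniq _ (iota_uniq 1 d)) Cond.
have Hs1' : forall u, u \in Xi -> [/\ s u != i, 1 <= s u <= d & f u != Some (s u)].
  move=> u uX; have uE : u \in enum Xi by rewrite mem_enum.
  have [h1 h2] := Hs1 u uE.
  by move: h1; rewrite inL => /andP [].
have Hs2' : {in Xi &, injective s}.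
  by move=> u v uX vX; apply: Hs2; rewrite mem_enum.
have Hadj : forall u v b, u \in Xi -> e u v -> c v = Some b -> s u != b.
  move=> u v b uX euv cv.
  have [sui sud fu] := Hs1' u uX.
  have : v \in x |: nbhd e x :|: B by apply/(cdom v); rewrite cv.
  rewrite !in_setU in_set1 => /orP [/orP [/eqP vx| vn]| vB].
  - by move: (notx u uX); rewrite -vx esym euv.
  - move: vn; rewrite /nbhd inE => /xnb [t ht vt].
    case: (eqVneq t i) => [ti|ti].
      have ci : c (xn i) = Some i by apply: cxn; lia.
      by move: cv; rewrite vt ti ci => -[E]; rewrite -E.
    by exfalso; apply: (K u t uX ht ti); rewrite esym -vt.
  - have pu := P1 u v uX euv vB.
    by apply: contra fu => /eqP ->; rewrite /f pu cv.
have Bi : bunches_upto e x xn i = B :|: Xi.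
  by rewrite /B /bunches_upto prednK ?big_nat_recr //; lia.
exists (fun v => if v \in Xi then Some (s v) else c v); split; [|split].
- split; [|split].
  + move=> u v a b euv.
    case uX: (u \in Xi); case vX: (v \in Xi).
    * move=> [<-] [<-] E; have uv : u = v by apply: Hs2'.
      by move: euv; rewrite uv eirr.
    * move=> [<-] cv; apply/eqP; exact: Hadj uX euv cv.
    * move=> cu [<-]; apply/eqP; rewrite eq_sym; apply: Hadj vX _ cu; by rewrite esym.
    * exact: cprop.
  + move=> v; rewrite Bi; case vX: (v \in Xi).
      by rewrite !in_setU vX !orbT.
    by rewrite !in_setU vX orbF -in_setU -!in_setU; exact: (cdom v).
  + move=> v a; case vX: (v \in Xi).
      by move=> [<-]; have [_ h _] := Hs1' v vX; lia.
    exact: crange.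
- move=> v a cv; case vX: (v \in Xi) => //.
  by rewrite XiD in cv.
- split.
    move=> v vX; rewrite vX; exists (s v); have [h1 h2 _] := Hs1' v vX.
    by split => //; split => //; apply/eqP.
  by move=> u v uX vX; rewrite uX vX => [[]]; apply: Hs2'.
Qed.
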